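(* Let the monoid module $S$ over $M$ be $\omega$-bicontinuous. Then for all programs $C$ and initial states $\sigma$, \[ \mathsf{wlp}[C](\mathbf{0})(\sigma) \;=\; \bigwedge_{n\in\mathbb{N}} \ \bigoplus_{\pi \in \mathrm{Paths}^{n}(\langle C,\sigma\rangle)} \mathrm{wgt}(\pi)\otimes \top, \] where $\bigwedge$ denotes the infimum (meet) with respect to the natural order of $S$.
   Context: $M=(M,\odot,1)$ is a monoid of weights and $S=(S,\oplus,\mathbf{0},\otimes)$ an $M$-module: a commutative monoid with an associative, distributive left action $\otimes\colon M\times S\to S$ with $1\otimes a=a$, $v\otimes\mathbf{0}=\mathbf{0}$. Natural order: $a\preceq b$ iff $\exists c:\ a\oplus c=b$. $\omega$-bicontinuous means both the natural order and its reverse are pointed $\omega$-cpos (so there is a greatest element $\top$) and $\oplus,\otimes$ are $\omega$-continuous w.r.t.\ both. $C$ is a weighted guarded-command (wGCL) program (assignments, sequencing, conditionals, binary branching $\{C_1\}\oplus\{C_2\}$, weighting statements $\odot a$ for $a\in M$, while loops); $\mathsf{wlp}$ is the weakest liberal preweighting transformer (the backward weighting-transformer semantics where loops are given by greatest fixed points; for weightings $f\colon\Sigma\to S$, $\mathsf{wlp}[\odot a](f)=a\otimes f$, branching maps to $\oplus$, etc.), and $\mathbf{0}$ here is the constant-$\mathbf{0}$ postweighting. $\mathrm{Paths}^{n}(\langle C,\sigma\rangle)$ is the set of (not necessarily terminating) computation paths of length $n$ in the small-step operational semantics starting in the configuration $\langle C,\sigma\rangle$, and $\mathrm{wgt}(\pi)\in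 M$ is the weight of path $\pi$, the product of the weights collected along it. *)

(* Defs.v *)
From Stdlib Require Import List ClassicalEpsilon.
Import ListNotations.
Set Implicit Arguments.

Record monoid := mkMonoid {
  mcar :> Type;
  mmul : mcar -> mcar -> mcar;
  mone : mcar;
  mmulA : forall a b c, mmul a (mmul b c) = mmul (mmul a b) c;
  mmul1l : forall a, mmul mone a = a;
  mmul1r : forall a, mmul a mone = a }.

Record mmodule (M : monoid) := mkModule {
  scar :> Type;
  sadd : scar -> scar -> scar;
  szero : scar;
  sact : M -> scar -> scar;
  saddA : forall x y z, sadd x (sadd y z) = sadd (sadd x y) z;
  saddC : forall x y, sadd x y = sadd y x;
  sadd0 : forall x, sadd szero x = x;
  sactA : forall (a b : M) x, sact (mmul M a b) x = sact a (sact b x);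
  sact1 : forall x, sact (mone M) x = x;
  sactD : forall a x y, sact a (sadd x y) = sadd (sact a x) (sact a y);
  sact0 : forall a, sact a szero = szero }.

Arguments sadd {M} _ _ _.
Arguments szero {M} _.
Arguments sact {M} _ _ _.

Section Order.
Variables (M : monoid) (S : mmodule M).

Definition nle (a b : S) : Prop := exists c, sadd S a c = b.

Definition is_sup (P : S -> Prop) (s : S) : Prop :=
  (forall x, P x -> nle x s) /\ (forall y, (forall x, P x -> nle x y) -> nle s y).
Definition is_inf (P : S -> Prop) (s : S) : Prop :=
  (forall x, P x -> nle s x) /\ (forall y, (forall x, P x -> nle y x) -> nle y s).

Definition range (u : nat -> S) : S -> Prop := fun x => exists n, u n = x.

Definition increasing (u : nat -> S) := forall n, nle (u n) (u (Datatypes.S n)).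
Definition decreasing (u : nat -> S) := forall n, nle (u (Datatypes.S n)) (u n).

(* ω-bicontinuity: the natural order is a partial order, it and its reverse
   are pointed ω-cpos (ω-chains have sups / infs, bottom is 0, a top exists),
   and ⊕, ⊗ are ω-continuous w.r.t. both orders. *)
Definition omega_bicontinuous : Prop :=
  (forall a b : S, nle a b -> nle b a -> a = b) /\
  (forall u, increasing u -> exists s, is_sup (range u) s) /\
  (forall u, decreasing u -> exists s, is_inf (range u) s) /\
  (forall a : S, nle (szero S) a) /\
  (exists t : S, forall a, nle a t) /\
  (forall u s (a : S), increasing u -> is_sup (range u) s ->
      is_sup (range (fun n => sadd S a (u n))) (sadd S a s)) /\
  (forall u s (a : S), decreasing u -> is_inf (range u) s ->
      is_inf (range (fun n => sadd S a (u n))) (sadd S a s)) /\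
  (forall u s (v : M), increasing u -> is_sup (range u) s ->
      is_sup (range (fun n => sact S v (u n))) (sact S v s)) /\
  (forall u s (v : M), decreasing u -> is_inf (range u) s ->
      is_inf (range (fun n => sact S v (u n))) (sact S v s)).

(* the greatest element ⊤ (exists under ω-bicontinuity) *)
Definition stop : S :=
  epsilon (inhabits (szero S)) (fun t => forall a : S, nle a t).

End Order.

Arguments nle {M S} _ _.
Arguments is_sup {M S} _ _.
Arguments is_inf {M S} _ _.
Arguments range {M S} _ _.
Arguments increasing {M S} _.
Arguments decreasing {M S} _.
Arguments omega_bicontinuous {M} _.
Arguments stop {M} _.

Section Programs.
Variables (M : monoid) (Sigma : Type).

Inductive prog : Type :=
| Assign : (Sigma -> Sigma) -> prog          (* x := E, as a state update *)
| Seq : prog -> prog -> prog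
| Ite : (Sigma -> bool) -> prog -> prog -> prog
| Branch : prog -> prog -> prog
| Weight : M -> prog
| While : (Sigma -> bool) -> prog -> prog.

Inductive conf : Type :=
| Run : prog -> Sigma -> conf
| Term : Sigma -> conf.

(* small-step operational semantics: list of weighted successor configurations
   (each list entry is a distinct transition; terminated configurations have
   no successors) *)
Fixpoint stepP (C : prog) (s : Sigma) : list (M * conf) :=
  match C with
  | Assign u => [(mone M, Term (u s))]
  | Weight a => [(a, Term s)]
  | Seq C1 C2 =>
      map (fun wc => match wc with
                     | (w, Run C1' t) => (w, Run (Seq C1' C2) t)
                     | (w, Term t) => (w, Run C2 t)
                     end) (stepP C1 s)
  | Ite b C1 C2 => [(mone M, Run (if b s then C1 else C2) s)]
  | Branch C1 C2 => [(mone M, Run C1 s); (mone M, Run C2 s)]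
  | While b C' => if b s then [(mone M, Run (Seq C' (While b C')) s)]
                  else [(mone M, Term s)]
  end.

Definition step (c : conf) : list (M * conf) :=
  match c with Run C s => stepP C s | Term _ => [] end.

(* a path of length n from c is the list of its n transitions
   (weight, target configuration) *)
Fixpoint paths (n : nat) (c : conf) : list (list (M * conf)) :=
  match n with
  | O => [[]]
  | Datatypes.S n' => flat_map (fun wc => map (cons wc) (paths n' (snd wc))) (step c)
  end.

Definition wgt (pi : list (M * conf)) : M :=
  fold_right (fun wc acc => mmul M (fst wc) acc) (mone M) pi.

End Programs.

Arguments Assign {M Sigma} _.
Arguments Weight {M Sigma} _.

Section Wlp.
Variables (M : monoid) (S : mmodule M) (Sigma : Type).

Definition pw_le (f g : Sigma -> S) : Prop := forall s, nle (f s) (g s).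

Definition gfp (Phi : (Sigma -> S) -> (Sigma -> S)) : Sigma -> S :=
  epsilon (inhabits (fun _ : Sigma => szero S))
    (fun g => (forall s, Phi g s = g s) /\
              forall h, (forall s, Phi h s = h s) -> pw_le h g).

Fixpoint wlp (C : prog M Sigma) (f : Sigma -> S) : Sigma -> S :=
  match C with
  | Assign u => fun s => f (u s)
  | Weight a => fun s => sact S a (f s)
  | Seq C1 C2 => wlp C1 (wlp C2 f)
  | Ite b C1 C2 => fun s => if b s then wlp C1 f s else wlp C2 f s
  | Branch C1 C2 => fun s => sadd S (wlp C1 f s) (wlp C2 f s)
  | While b C' => gfp (fun X s => if b s then wlp C' X s else f s)
  end.

Definition path_sum (n : nat) (C : prog M Sigma) (s : Sigma) : S :=
  fold_right (sadd S) (szero S)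
    (map (fun pi => sact S (wgt pi) (stop S)) (paths n (Run C s))).

End Wlp.

(* Main.v *)
Require Import Defs.
From Stdlib Require Import List ClassicalEpsilon FunctionalExtensionality Arith Lia.
Import ListNotations.
Set Implicit Arguments.

Definition sumL {M : monoid} (Mo : mmodule M) (l : list Mo) : Mo :=
  fold_right (sadd Mo) (szero Mo) l.

Lemma nle_refl {M} (Mo : mmodule M) (a : Mo) : nle a a.
Proof. exists (szero Mo). rewrite saddC, sadd0. reflexivity. Qed.

Lemma nle_trans {M} (Mo : mmodule M) (a b c : Mo) : nle a b -> nle b c -> nle a c.
Proof. intros [x Hx] [y Hy]. exists (sadd Mo x y). rewrite saddA, Hx. exact Hy. Qed.

Lemma nle_0 {M} (Mo : mmodule M) (a : Mo) : nle (szero Mo) a.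
Proof. exists a. apply sadd0. Qed.

Lemma nle_add {M} (Mo : mmodule M) (a a' b b' : Mo) :
  nle a a' -> nle b b' -> nle (sadd Mo a b) (sadd Mo a' b').
Proof.
  intros [x Hx] [y Hy]. exists (sadd Mo x y). subst.
  rewrite !saddA. f_equal. rewrite <- !saddA. f_equal. apply saddC.
Qed.

Lemma nle_act {M} (Mo : mmodule M) (v : M) (a b : Mo) :
  nle a b -> nle (sact Mo v a) (sact Mo v b).
Proof. intros [x Hx]. exists (sact Mo v x). subst. rewrite sactD. reflexivity. Qed.

Lemma add0r {M} (Mo : mmodule M) (a : Mo) : sadd Mo a (szero Mo) = a.
Proof. rewrite saddC. apply sadd0. Qed.

Lemma dec_le {M} (Mo : mmodule M) (u : nat -> Mo) :
  decreasing u -> forall m n, m <= n -> nle (u n) (u m).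
Proof.
  intros Hd m n Hmn. induction Hmn. apply nle_refl.
  eapply nle_trans. apply Hd. exact IHHmn.
Qed.

Lemma sum_mono {M} (Mo : mmodule M) {A} (f f' : A -> Mo) (l : list A) :
  (forall x, nle (f x) (f' x)) -> nle (sumL Mo (map f l)) (sumL Mo (map f' l)).
Proof.
  intros H. induction l; simpl. apply nle_refl. apply nle_add; auto.
Qed.

Lemma inf_unique {M} (Mo : mmodule M) (P : Mo -> Prop) x y :
  (forall a b : Mo, nle a b -> nle b a -> a = b) ->
  is_inf P x -> is_inf P y -> x = y.
Proof.
  intros As [H1 H2] [H3 H4]. apply As; [apply H4 | apply H2]; assumption.
Qed.

Lemma inf_shift {M} (Mo : mmodule M) (u : nat -> Mo) x :
  decreasing u -> is_inf (range u) x -> is_inf (range (fun n => u (Datatypes.S n))) x.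
Proof.
  intros Hd [H1 H2]. split.
  - intros y [n <-]. apply H1. exists (Datatypes.S n). reflexivity.
  - intros y Hy. apply H2. intros z [n <-].
    eapply nle_trans. apply Hy. exists n. reflexivity. apply Hd.
Qed.

Lemma inf_const {M} (Mo : mmodule M) (a : Mo) : is_inf (range (fun _ : nat => a)) a.
Proof.
  split. intros y [n <-]. apply nle_refl.
  intros y Hy. apply Hy. exists 0. reflexivity.
Qed.

Lemma inf_add {M} (Mo : mmodule M) (Hb : omega_bicontinuous Mo) (u v : nat -> Mo) a b :
  decreasing u -> decreasing v -> is_inf (range u) a -> is_inf (range v) b ->
  is_inf (range (fun n => sadd Mo (u n) (v n))) (sadd Mo a b).
Proof.
  destruct Hb as (As & _ & _ & _ & _ & _ & Hai & _).
  intros Du Dv [Ha1 Ha2] [Hb1 Hb2]. split.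
  - intros y [n <-]. apply nle_add; [apply Ha1|apply Hb1]; exists n; reflexivity.
  - intros y Hy.
    assert (Hm : forall m, nle y (sadd Mo (u m) b)).
    { intro m. destruct (Hai v b (u m) Dv (conj Hb1 Hb2)) as [_ G]. apply G.
      intros z [n <-]. eapply nle_trans. apply Hy. exists (Nat.max m n). reflexivity.
      apply nle_add; apply dec_le; auto; lia. }
    destruct (Hai u a b Du (conj Ha1 Ha2)) as [_ G].
    rewrite saddC. apply G. intros z [n <-]. rewrite saddC. apply Hm.
Qed.

Definition Psi {M} (Mo : mmodule M) {Sigma} (g : Sigma -> Mo) (V : conf M Sigma -> Mo)
  (c : conf M Sigma) : Mo :=
  match c with
  | Run C t => sumL Mo (map (fun wc => sact Mo (fst wc) (V (snd wc))) (stepP C t))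
  | Term _ t => g t
  end.

Fixpoint PP {M} (Mo : mmodule M) {Sigma} (g : Sigma -> Mo) (n : nat) : conf M Sigma -> Mo :=
  match n with
  | O => fun _ => stop Mo
  | Datatypes.S n' => Psi Mo g (PP Mo g n')
  end.

Definition LL {M} (Mo : mmodule M) {Sigma} (g : Sigma -> Mo) (c : conf M Sigma) : Mo :=
  epsilon (inhabits (szero Mo)) (fun x => is_inf (range (fun n => PP Mo g n c)) x).

Lemma Psi_mono {M} (Mo : mmodule M) {Sigma} (g : Sigma -> Mo) V V' :
  (forall c, nle (V c) (V' c)) -> forall c, nle (Psi Mo g V c) (Psi Mo g V' c).
Proof.
  intros H [C t|t]; simpl. apply sum_mono. intros. apply nle_act, H. apply nle_refl.
Qed.

Lemma stop_top {M} (Mo : mmodule M) (Hb : omega_bicontinuous Mo) : forall a : Mo, nle a (stop Mo).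
Proof.
  destruct Hb as (_ & _ & _ & _ & Ht & _).
  unfold stop. apply (epsilon_spec (inhabits (szero Mo)) (fun t => forall a : Mo, nle a t) Ht).
Qed.

Lemma PP_dec {M} (Mo : mmodule M) (Hb : omega_bicontinuous Mo) {Sigma} (g : Sigma -> Mo) c :
  decreasing (fun n => PP Mo g n c).
Proof.
  intro n. revert c. induction n; intro c.
  - apply stop_top; auto.
  - simpl. apply Psi_mono. exact IHn.
Qed.

Lemma LL_spec {M} (Mo : mmodule M) (Hb : omega_bicontinuous Mo) {Sigma} (g : Sigma -> Mo) c :
  is_inf (range (fun n => PP Mo g n c)) (LL Mo g c).
Proof.
  unfold LL. apply epsilon_spec.
  pose proof Hb as (_ & _ & Hi & _). apply Hi. apply PP_dec; auto.
Qed.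

Lemma inf_sum {M} (Mo : mmodule M) (Hb : omega_bicontinuous Mo) {A}
  (F : nat -> A -> Mo) (L : A -> Mo) (w : A -> M) :
  (forall c, decreasing (fun n => F n c)) ->
  (forall c, is_inf (range (fun n => F n c)) (L c)) ->
  forall l, decreasing (fun n => sumL Mo (map (fun x => sact Mo (w x) (F n x)) l)) /\
    is_inf (range (fun n => sumL Mo (map (fun x => sact Mo (w x) (F n x)) l)))
           (sumL Mo (map (fun x => sact Mo (w x) (L x)) l)).
Proof.
  intros Hd Hi l. induction l as [|x l [IH1 IH2]]; simpl.
  - split. intro n. apply nle_refl. apply inf_const.
  - assert (Da : decreasing (fun n => sact Mo (w x) (F n x))).
    { intro n. apply nle_act, Hd. }
    split.
    + intro n. apply nle_add. apply Da. apply IH1.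
    + apply inf_add; auto.
      destruct Hb as (_ & _ & _ & _ & _ & _ & _ & _ & Hact).
      apply Hact; auto.
Qed.

Lemma LL_fix {M} (Mo : mmodule M) (Hb : omega_bicontinuous Mo) {Sigma} (g : Sigma -> Mo) c :
  LL Mo g c = Psi Mo g (LL Mo g) c.
Proof.
  pose proof (Hb) as (As & _).
  apply (inf_unique As (LL_spec Hb g c)).
  destruct c as [C t|t].
  - pose proof (inf_shift (PP_dec Hb g (Run C t)) (LL_spec Hb g (Run C t))) as H.
    pose proof (inf_sum Hb (fun n wc => PP Mo g n (snd wc)) (fun wc => LL Mo g (snd wc)) (@fst M (conf M Sigma))
       (fun wc => PP_dec Hb g (snd wc)) (fun wc => LL_spec Hb g (snd wc))) as H2.
    destruct (H2 (stepP C t)) as [_ H3].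
    simpl. rewrite <- (inf_unique As H H3). apply LL_spec; auto.
  - simpl. split.
    + intros y [n <-]. destruct n. apply stop_top; auto. apply nle_refl.
    + intros y Hy. apply Hy. exists 1. reflexivity.
Qed.

Lemma post_le {M} (Mo : mmodule M) (Hb : omega_bicontinuous Mo) {Sigma} (g : Sigma -> Mo) V :
  (forall c, nle (V c) (Psi Mo g V c)) -> forall c, nle (V c) (LL Mo g c).
Proof.
  intros HV c. destruct (LL_spec Hb g c) as [_ H2]. apply H2.
  intros x [n <-]. clear H2. revert c. induction n; intro c.
  - apply stop_top; auto.
  - eapply nle_trans. apply HV. simpl. apply Psi_mono. exact IHn.
Qed.

Lemma Seq_neq {M Sigma} (B A : prog M Sigma) : B <> Seq A B.
Proof.
  revert A. induction B; intros A H; try discriminate.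
  injection H as H1 H2. eapply IHB2. exact H2.
Qed.

Lemma LL_term {M} (Mo : mmodule M) (Hb : omega_bicontinuous Mo) {Sigma} (g : Sigma -> Mo) t :
  LL Mo g (Term M t) = g t.
Proof. rewrite LL_fix; auto. Qed.

Lemma compose {M} (Mo : mmodule M) (Hb : omega_bicontinuous Mo) {Sigma} (g : Sigma -> Mo)
  (C1 C2 : prog M Sigma) s :
  LL Mo g (Run (Seq C1 C2) s) = LL Mo (fun t => LL Mo g (Run C2 t)) (Run C1 s).
Proof.
  pose proof (Hb) as (As & _).
  set (g' := fun t => LL Mo g (Run C2 t)).
  set (V1 := fun c : conf M Sigma => match c with
              | Run C' t => LL Mo g (Run (Seq C' C2) t)
              | Term _ t => LL Mo g (Run C2 t) end).
  assert (D1 : forall c, nle (V1 c) (LL Mo g' c)).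
  { apply post_le; auto. intros [C' t|t]; simpl.
    - rewrite LL_fix; auto. simpl. rewrite map_map. apply sum_mono.
      intros [w [C'' u|u]]; simpl; apply nle_refl.
    - apply nle_refl. }
  apply As. apply (D1 (Run C1 s)).
  set (V := fun c : conf M Sigma => match c with
              | Run (Seq C' C2') t =>
                  if excluded_middle_informative (C2' = C2) then LL Mo g' (Run C' t)
                  else LL Mo g (Run (Seq C' C2') t)
              | _ => LL Mo g c end).
  assert (Vge : forall c, nle (LL Mo g c) (V c)).
  { intros [C t|t]; simpl; try apply nle_refl.
    destruct C as [| A B | | | |]; try apply nle_refl.
    destruct (excluded_middle_informative (B = C2)); try apply nle_refl.
    subst. apply (D1 (Run A t)). }
  assert (Vns : forall c, (forall C' t, c <> Run (Seq C' C2) t) -> V c = LL Mo g c).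
  { intros [C t|t] Hc; simpl; try reflexivity.
    destruct C as [| A B | | | |]; try reflexivity.
    destruct (excluded_middle_informative (B = C2)); try reflexivity.
    subst. exfalso. eapply Hc. reflexivity. }
  assert (Vs : forall C' t, V (Run (Seq C' C2) t) = LL Mo g' (Run C' t)).
  { intros. simpl. destruct (excluded_middle_informative (C2 = C2)); congruence. }
  clearbody V.
  assert (HV : forall c, nle (V c) (Psi Mo g V c)).
  { intro c.
    destruct (excluded_middle_informative (exists C' t, c = Run (Seq C' C2) t))
      as [[C' [t ->]]|Hn].
    - rewrite Vs. rewrite LL_fix; auto. simpl. rewrite map_map. apply sum_mono.
      intros [w [C'' u|u]]; simpl.
      + rewrite Vs. apply nle_refl.
      + rewrite Vns. rewrite (LL_term Hb); auto. apply nle_refl.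
        intros C3 t3 Heq. injection Heq as E1 E2. eapply Seq_neq. exact E1.
    - rewrite Vns. rewrite LL_fix; auto. apply Psi_mono. exact Vge.
      intros C' t Heq. apply Hn. eauto. }
  pose proof (post_le Hb g V HV (Run (Seq C1 C2) s)) as H.
  rewrite Vs in H. exact H.
Qed.

Lemma wlp_LL {M} (Mo : mmodule M) (Hb : omega_bicontinuous Mo) {Sigma} (C : prog M Sigma) :
  forall g s, wlp Mo C g s = LL Mo g (Run C s).
Proof.
  pose proof (Hb) as (As & _).
  induction C as [u | C1 IH1 C2 IH2 | b C1 IH1 C2 IH2 | C1 IH1 C2 IH2 | a | b C IH];
    intros g s.
  - rewrite LL_fix; auto; simpl. rewrite (LL_term Hb g (u s)), sact1, add0r; auto.
  - rewrite compose; auto. simpl.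
    rewrite IH1. f_equal. apply functional_extensionality. intro t. apply IH2.
  - rewrite LL_fix; auto; simpl. rewrite sact1, add0r. destruct (b s); auto.
  - rewrite LL_fix; auto; simpl. rewrite !sact1, add0r, IH1, IH2. reflexivity.
  - rewrite LL_fix; auto; simpl. rewrite (LL_term Hb g s), add0r; auto.
  - simpl. set (Phi := fun (X : Sigma -> Mo) s => if b s then wlp Mo C X s else g s).
    set (Y := fun t => LL Mo g (Run (While b C) t)).
    assert (Yfix : forall t, Phi Y t = Y t).
    { intro t. unfold Phi, Y. rewrite (LL_fix Hb g (Run (While b C) t)). simpl.
      destruct (b t); simpl; rewrite sact1, add0r.
      - rewrite compose, IH; auto.
      - rewrite (LL_term Hb); auto. }
    assert (Ygr : forall h, (forall t, Phi h t = h t) -> forall t, nle (h t) (Y t)).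
    { intros h Hh.
      set (V := fun c : conf M Sigma => match c with
        | Term _ t => g t
        | Run P t => if excluded_middle_informative (P = While b C) then h t else
            match P with
            | Seq C' C2' => if excluded_middle_informative (C2' = While b C)
                            then LL Mo h (Run C' t) else szero Mo
            | _ => szero Mo end end).
      assert (VW : forall t, V (Run (While b C) t) = h t).
      { intro t. simpl. destruct (excluded_middle_informative (While b C = While b C)); congruence. }
      assert (VS : forall C' t, V (Run (Seq C' (While b C)) t) = LL Mo h (Run C' t)).
      { intros C' t. simpl.
        destruct (excluded_middle_informative (Seq C' (While b C) = While b C)); try discriminate.
        destruct (excluded_middle_informative (While b C = While b C)); congruence. }
      assert (V0 : forall c, (forall t, c <> Run (While b C) t) ->
                  (forall C' t, c <> Run (Seq C' (While b C)) t) ->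
                  (forall t, c <> Term M t) -> V c = szero Mo).
      { intros [P t|t] H1 H2 H3; [|exfalso; eapply H3; reflexivity].
        simpl. destruct (excluded_middle_informative (P = While b C)).
        subst. exfalso. eapply H1; reflexivity.
        destruct P as [| A B | | | |]; try reflexivity.
        destruct (excluded_middle_informative (B = While b C)); try reflexivity.
        subst. exfalso. eapply H2; reflexivity. }
      assert (VT : forall t, V (Term M t) = g t) by reflexivity.
      clearbody V.
      assert (HV : forall c, nle (V c) (Psi Mo g V c)).
      { intro c.
        destruct (excluded_middle_informative (exists t, c = Run (While b C) t)) as [[t ->]|N1].
        { rewrite VW. rewrite <- Hh. unfold Phi. simpl. destruct (b t); simpl; rewrite sact1, add0r.
          - rewrite VS, IH. apply nle_refl.
          - rewrite VT. apply nle_refl. }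
        destruct (excluded_middle_informative (exists C' t, c = Run (Seq C' (While b C)) t))
          as [[C' [t ->]]|N2].
        { rewrite VS, LL_fix; auto. simpl. rewrite map_map. apply sum_mono.
          intros [w [C'' u|u]]; simpl.
          - rewrite VS. apply nle_refl.
          - rewrite VW, (LL_term Hb); auto. apply nle_refl. }
        destruct c as [P t|t].
        - rewrite V0. apply nle_0.
          intros t' E. apply N1. eauto.
          intros C' t' E. apply N2. eauto.
          discriminate.
        - rewrite VT. apply nle_refl. }
      intro t. rewrite <- VW. apply (post_le Hb g V HV). }
    unfold gfp.
    destruct (epsilon_spec (inhabits (fun _ : Sigma => szero Mo))
      (fun G => (forall s, Phi G s = G s) /\
              forall h, (forall s, Phi h s = h s) -> pw_le Mo h G))
      as [G1 G2].
    { exists Y. split. exact Yfix. exact Ygr. }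
    fold Phi.
    change (LL Mo g (Run (While b C) s)) with (Y s).
    apply As. apply Ygr. exact G1. apply G2. exact Yfix.
Qed.

Lemma sumL_app {M} (Mo : mmodule M) (l1 l2 : list Mo) :
  sumL Mo (l1 ++ l2) = sadd Mo (sumL Mo l1) (sumL Mo l2).
Proof.
  induction l1; simpl. rewrite sadd0; auto. rewrite IHl1, saddA. reflexivity.
Qed.

Lemma sumL_act {M} (Mo : mmodule M) {A} (w : M) (f : A -> Mo) l :
  sumL Mo (map (fun x => sact Mo w (f x)) l) = sact Mo w (sumL Mo (map f l)).
Proof.
  induction l; simpl. rewrite sact0; auto. rewrite IHl, sactD. reflexivity.
Qed.

Lemma paths_PP {M} (Mo : mmodule M) {Sigma} n (c : conf M Sigma) :
  sumL Mo (map (fun pi => sact Mo (wgt pi) (stop Mo)) (paths n c)) =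
  PP Mo (fun _ => szero Mo) n c.
Proof.
  revert c. induction n; intro c.
  - simpl. unfold wgt. simpl. rewrite sact1, add0r. reflexivity.
  - simpl. destruct c as [C t|t]; simpl; [|reflexivity].
    induction (stepP C t) as [|[w c'] l IHl]; simpl; [reflexivity|].
    rewrite map_app, sumL_app, IHl. f_equal.
    rewrite map_map. simpl. rewrite <- IHn, <- sumL_act. f_equal.
    apply map_ext. intro pi. unfold wgt. simpl. rewrite sactA. reflexivity.
Qed.

Theorem mainTheorem6 (M : monoid) (S : mmodule M) (Sigma : Type) :
  omega_bicontinuous S ->
  forall (C : prog M Sigma) (s : Sigma),
    is_inf (range (fun n => path_sum S n C s))
           (wlp S C (fun _ => szero S) s).
Proof.
  intros Hb C s. rewrite (wlp_LL Hb).
  replace (fun n => path_sum S n C s) with (fun n => PP S (fun _ => szero S) n (Run C s)).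
  apply LL_spec; auto.
  apply functional_extensionality. intro n. unfold path_sum.
  rewrite <- paths_PP. reflexivity.
Qed.
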